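(* Let $F:\ell^2(\mathbb{Z})\to\ell^2(\mathbb{Z})$ be the bilateral weighted forward shift $Fe_n=w_ne_{n+1}$ ($n\in\mathbb{Z}$), where $w_n=3$ for $n\ge0$ and $w_n=4$ for $n<0$. Let $\mathcal{M}=\{(a_n)_{n\in\mathbb{Z}}\in\ell^2(\mathbb{Z}):a_{2n}=0\text{ for all }n\in\mathbb{Z}\}$. Then $F$ is $\mathcal{M}$-diskcyclic but not $\mathcal{M}$-hypercyclic.
   Context: $(e_n)_{n\in\mathbb{Z}}$ is the canonical orthonormal basis of $\ell^2(\mathbb{Z})$. $\mathbb{D}=\{\alpha\in\mathbb{C}:|\alpha|\le1\}$. An operator $T$ is $\mathcal{M}$-diskcyclic if there is $x$ with $\{\alpha T^nx:\alpha\in\mathbb{D},n\ge0\}\cap\mathcal{M}$ dense in $\mathcal{M}$, and $\mathcal{M}$-hypercyclic if there is $x$ with $\{T^nx:n\ge0\}\cap\mathcal{M}$ dense in $\mathcal{M}$. *)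

(* Defs.v *)
From Stdlib Require Import Reals ZArith.
Open Scope R_scope.

(** Complex numbers as R * R (real part, imaginary part). *)
Definition C := (R * R)%type.
Definition Cmul (a b : C) : C :=
  (fst a * fst b - snd a * snd b, fst a * snd b + snd a * fst b).
Definition Csub (a b : C) : C := (fst a - fst b, snd a - snd b).
Definition Czero : C := (0, 0).
Definition RCmul (r : R) (a : C) : C := (r * fst a, r * snd a).
Definition Cnorm2 (z : C) : R := fst z * fst z + snd z * snd z.

Definition seqZ := Z -> C.

Definition psumZ (f : Z -> R) (N : nat) : R :=
  sum_f_R0 (fun i => f (Z.of_nat i - Z.of_nat N)%Z) (2 * N).

(** sum_{k in Z} f k = l  (for nonnegative f, symmetric partial sums suffice). *)
Definition sumZ_is (f : Z -> R) (l : R) : Prop := Un_cv (psumZ f) l.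

Definition in_l2 (a : seqZ) : Prop :=
  exists l, sumZ_is (fun k => Cnorm2 (a k)) l.

Definition l2dist_lt (a b : seqZ) (eps : R) : Prop :=
  exists l, sumZ_is (fun k => Cnorm2 (Csub (a k) (b k))) l /\ sqrt l < eps.

Definition w (n : Z) : R := if (0 <=? n)%Z then 3 else 4.

(** Bilateral weighted forward shift  F e_n = w_n e_{n+1},
    i.e. (F a)_n = w_{n-1} a_{n-1}. *)
Definition Fshift (a : seqZ) : seqZ := fun n => RCmul (w (n - 1)) (a (n - 1)%Z).


Definition scal (alpha : C) (a : seqZ) : seqZ := fun n => Cmul alpha (a n).

Definition inM (a : seqZ) : Prop := in_l2 a /\ forall n : Z, a (2 * n)%Z = Czero.

Definition M_diskcyclic (T : seqZ -> seqZ) (M : seqZ -> Prop) : Prop :=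
  exists x, in_l2 x /\
    forall y, M y -> forall eps, 0 < eps ->
      exists (alpha : C) (n : nat),
        Cnorm2 alpha <= 1 /\ M (scal alpha (Nat.iter n T x)) /\
        l2dist_lt (scal alpha (Nat.iter n T x)) y eps.

Definition M_hypercyclic (T : seqZ -> seqZ) (M : seqZ -> Prop) : Prop :=
  exists x, in_l2 x /\
    forall y, M y -> forall eps, 0 < eps ->
      exists n : nat, M (Nat.iter n T x) /\ l2dist_lt (Nat.iter n T x) y eps.

(* Main.v *)
Require Import Defs.
From Stdlib Require Import Reals ZArith Lra Lia Psatz Classical ClassicalEpsilon Cantor.
Open Scope R_scope.

Lemma sum_shift (g : nat -> R) n :
  sum_f_R0 g (S n) = g 0%nat + sum_f_R0 (fun i => g (S i)) n.
Proof.
  induction n as [|n IH]; simpl; [ring|].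
  simpl in IH. rewrite IH. ring.
Qed.

Lemma psumZ_0 f : psumZ f 0 = f 0%Z.
Proof. reflexivity. Qed.

Lemma psumZ_S f N :
  psumZ f (S N) = psumZ f N + f (- Z.of_nat (S N))%Z + f (Z.of_nat (S N)).
Proof.
  unfold psumZ.
  replace (2 * S N)%nat with (S (S (2 * N))) by lia.
  rewrite tech5. rewrite sum_shift.
  rewrite (sum_eq (fun i => f (Z.of_nat (S i) - Z.of_nat (S N))%Z)
                 (fun i => f (Z.of_nat i - Z.of_nat N)%Z)).
  2:{ intros i _. f_equal. lia. }
  replace (Z.of_nat 0 - Z.of_nat (S N))%Z with (- Z.of_nat (S N))%Z by lia.
  replace (Z.of_nat (S (S (2 * N))) - Z.of_nat (S N))%Z with (Z.of_nat (S N)) by lia.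
  ring.
Qed.

Lemma psumZ_ext f g N : (forall j, f j = g j) -> psumZ f N = psumZ g N.
Proof. intros H; unfold psumZ; apply sum_eq; intros; apply H. Qed.

Lemma psumZ_le f g N : (forall j, f j <= g j) -> psumZ f N <= psumZ g N.
Proof.
  intros H; induction N as [|N IH].
  - rewrite !psumZ_0; apply H.
  - rewrite !psumZ_S. specialize (H (- Z.of_nat (S N))%Z) as H1.
    specialize (H (Z.of_nat (S N))). lra.
Qed.

Lemma psumZ_plus f g N : psumZ (fun j => f j + g j) N = psumZ f N + psumZ g N.
Proof. induction N as [|N IH]; [rewrite !psumZ_0; ring| rewrite !psumZ_S, IH; ring]. Qed.

Lemma psumZ_scal c f N : psumZ (fun j => c * f j) N = c * psumZ f N.
Proof. induction N as [|N IH]; [rewrite !psumZ_0; ring| rewrite !psumZ_S, IH; ring]. Qed.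

Lemma psumZ_nonneg f N : (forall j, 0 <= f j) -> 0 <= psumZ f N.
Proof.
  intros H; induction N as [|N IH]; [rewrite psumZ_0; apply H|rewrite psumZ_S].
  specialize (H (- Z.of_nat (S N))%Z) as H1. specialize (H (Z.of_nat (S N))). lra.
Qed.

Lemma psumZ_grow f : (forall j, 0 <= f j) -> Un_growing (psumZ f).
Proof.
  intros H n. rewrite psumZ_S.
  specialize (H (- Z.of_nat (S n))%Z) as H1. specialize (H (Z.of_nat (S n))). lra.
Qed.

Lemma psumZ_mono f N M : (forall j, 0 <= f j) -> (N <= M)%nat -> psumZ f N <= psumZ f M.
Proof.
  intros H HNM. induction HNM; [lra|]. pose proof (psumZ_grow f H m). lra.
Qed.

Lemma psumZ_le_lim f l N : (forall j, 0 <= f j) -> sumZ_is f l -> psumZ f N <= l.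
Proof. intros H Hl. apply (growing_ineq (psumZ f)); [apply psumZ_grow; auto| exact Hl]. Qed.

Lemma term_le_psumZ f k N : (forall j, 0 <= f j) -> (Z.abs k <= Z.of_nat N)%Z -> f k <= psumZ f N.
Proof.
  intros H. induction N as [|N IH]; intros Hk.
  - rewrite psumZ_0. replace k with 0%Z by lia. apply Rle_refl.
  - rewrite psumZ_S.
    specialize (H (- Z.of_nat (S N))%Z) as H1. pose proof (H (Z.of_nat (S N))) as H2.
    pose proof (psumZ_nonneg f N H) as H3.
    destruct (Z_le_gt_dec (Z.abs k) (Z.of_nat N)).
    + specialize (IH l). lra.
    + destruct (Z_le_gt_dec 0 k).
      * replace k with (Z.of_nat (S N)) by lia. lra.
      * replace k with (- Z.of_nat (S N))%Z by lia. lra.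
Qed.

Lemma term_le_lim f k l : (forall j, 0 <= f j) -> sumZ_is f l -> f k <= l.
Proof.
  intros H Hl. apply Rle_trans with (psumZ f (Z.abs_nat k)).
  - apply term_le_psumZ; auto. lia.
  - apply psumZ_le_lim; auto.
Qed.

Lemma sumZ_bounded f B : (forall j, 0 <= f j) -> (forall N, psumZ f N <= B) ->
  exists l, sumZ_is f l /\ l <= B.
Proof.
  intros H HB.
  destruct (growing_cv (psumZ f)) as [l Hl].
  - apply psumZ_grow; auto.
  - exists B. intros x [N ->]. apply HB.
  - exists l. split; [exact Hl|].
    destruct (Rle_dec l B) as [|Hn]; [auto|exfalso].
    destruct (Hl (l - B)) as [N HN]; [lra|].
    specialize (HN N (le_n N)). specialize (HB N). unfold R_dist in HN.
    rewrite Rabs_left1 in HN; lra.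
Qed.

Lemma sumZ_compare f g lg : (forall j, 0 <= f j) -> (forall j, f j <= g j) ->
  sumZ_is g lg -> exists l, sumZ_is f l /\ l <= lg.
Proof.
  intros H1 H2 Hg. apply sumZ_bounded; auto. intros N.
  apply Rle_trans with (psumZ g N); [apply psumZ_le; auto|].
  apply psumZ_le_lim; auto. intros j; specialize (H1 j); specialize (H2 j); lra.
Qed.

Lemma sumZ_finite f N0 : (forall j, (Z.of_nat N0 < Z.abs j)%Z -> f j = 0) ->
  sumZ_is f (psumZ f N0).
Proof.
  intros H eps Heps. exists N0. intros n Hn. unfold R_dist.
  assert (psumZ f n = psumZ f N0) as ->.
  { induction Hn; [reflexivity|]. rewrite psumZ_S, IHHn, !H; try lia. ring. }
  rewrite Rminus_diag, Rabs_R0; lra.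
Qed.

Lemma sumZ_plus f g lf lg : sumZ_is f lf -> sumZ_is g lg ->
  sumZ_is (fun j => f j + g j) (lf + lg).
Proof.
  intros Hf Hg. unfold sumZ_is.
  eapply Un_cv_ext.
  - intros n. symmetry. apply psumZ_plus.
  - apply CV_plus; auto.
Qed.

Lemma psumZ_ext_loc f g N : (forall j, (Z.abs j <= Z.of_nat N)%Z -> f j = g j) ->
  psumZ f N = psumZ g N.
Proof.
  induction N as [|N IH]; intros H.
  - rewrite !psumZ_0. apply H. lia.
  - rewrite !psumZ_S, IH, !H; try lia. reflexivity. intros j Hj; apply H; lia.
Qed.

Lemma psumZ_zero N : psumZ (fun _ => 0) N = 0.
Proof. induction N; [reflexivity| rewrite psumZ_S, IHN; ring]. Qed.

Definition tailZ (N : nat) (f : Z -> R) : Z -> R :=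
  fun j => if (Z.abs j <=? Z.of_nat N)%Z then 0 else f j.

Lemma tail_nonneg N f : (forall j, 0 <= f j) -> forall j, 0 <= tailZ N f j.
Proof. intros H j; unfold tailZ; destruct (_ <=? _)%Z; [lra|auto]. Qed.

Lemma psumZ_tail f l N M : (forall j, 0 <= f j) -> sumZ_is f l ->
  psumZ (tailZ N f) M <= l - psumZ f N.
Proof.
  intros H Hl. pose proof (psumZ_le_lim f l N H Hl) as HN.
  destruct (le_lt_dec N M) as [HM|HM].
  - assert (psumZ (tailZ N f) M = psumZ f M - psumZ f N) as ->.
    { induction HM.
      - rewrite (psumZ_ext_loc _ (fun _ => 0)).
        + rewrite psumZ_zero. ring.
        + intros j Hj. unfold tailZ. replace (Z.abs j <=? Z.of_nat N)%Z with true; [reflexivity|].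
          symmetry; apply Z.leb_le; lia.
      - rewrite !psumZ_S, IHHM. unfold tailZ.
        replace (Z.abs (- Z.of_nat (S m)) <=? Z.of_nat N)%Z with false by (symmetry; apply Z.leb_gt; lia).
        replace (Z.abs (Z.of_nat (S m)) <=? Z.of_nat N)%Z with false by (symmetry; apply Z.leb_gt; lia).
        ring. }
    pose proof (psumZ_le_lim f l M H Hl). lra.
  - rewrite (psumZ_ext_loc _ (fun j => 0 * f j)).
    + rewrite psumZ_scal. pose proof (psumZ_nonneg f N H). lra.
    + intros j Hj. unfold tailZ. replace (Z.abs j <=? Z.of_nat N)%Z with true; [ring|].
      symmetry; apply Z.leb_le; lia.
Qed.

Definition Env (j : Z) : R := (7/8) ^ (Z.abs_nat j).

Lemma Env_pos j : 0 < Env j.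
Proof. unfold Env; apply pow_lt; lra. Qed.

Lemma psumZ_Env N : psumZ Env N = 15 - 14 * (7/8)^N.
Proof.
  induction N as [|N IH].
  - rewrite psumZ_0. unfold Env. simpl. lra.
  - rewrite psumZ_S, IH. unfold Env.
    replace (Z.abs_nat (- Z.of_nat (S N))) with (S N) by lia.
    replace (Z.abs_nat (Z.of_nat (S N))) with (S N) by lia.
    rewrite <- tech_pow_Rmult. lra.
Qed.

Lemma sumZ_env f c : (forall j, 0 <= f j) -> (forall j, f j <= c * Env j) -> 0 <= c ->
  exists l, sumZ_is f l /\ l <= 15 * c.
Proof.
  intros H1 H2 Hc. apply sumZ_bounded; auto. intros N.
  eapply Rle_trans. apply psumZ_le. exact H2. rewrite psumZ_scal, psumZ_Env.
  pose proof (pow_le (7/8) N). nra.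
Qed.

Lemma Cnorm2_nonneg z : 0 <= Cnorm2 z.
Proof. unfold Cnorm2. nra. Qed.

Lemma w_ge1 n : 1 <= w n.
Proof. unfold w. destruct (0 <=? n)%Z; lra. Qed.

Lemma Cnorm2_RCmul c z : Cnorm2 (RCmul c z) = c * c * Cnorm2 z.
Proof. unfold Cnorm2, RCmul; simpl; ring. Qed.

Lemma iter_F_ge n a j : Cnorm2 (a (j - Z.of_nat n)%Z) <= Cnorm2 (Nat.iter n Fshift a j).
Proof.
  revert j; induction n as [|n IH]; intros j.
  - simpl. replace (j - 0)%Z with j by lia. lra.
  - simpl Nat.iter. unfold Fshift at 1. rewrite Cnorm2_RCmul.
    specialize (IH (j - 1)%Z). replace (j - 1 - Z.of_nat n)%Z with (j - Z.of_nat (S n))%Z in IH by lia.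
    pose proof (w_ge1 (j - 1)). pose proof (Cnorm2_nonneg (Nat.iter n Fshift a (j - 1)%Z)).
    assert (1 <= w (j-1)%Z * w (j-1)%Z) by nra. nra.
Qed.

Lemma sumZ_zero : sumZ_is (fun _ => 0) 0.
Proof.
  pose proof (sumZ_finite (fun _ => 0) 0 (fun _ _ => eq_refl)). rewrite psumZ_0 in H. exact H.
Qed.

Lemma zero_inM : inM (fun _ => Czero).
Proof.
  split; [|reflexivity]. exists 0. eapply Un_cv_ext; [|apply sumZ_zero].
  intros n. apply psumZ_ext. intros; unfold Cnorm2, Czero; simpl; ring.
Qed.

Definition e1 : seqZ := fun j => if (j =? 1)%Z then (1, 0) else Czero.

Lemma e1_inM : inM e1.
Proof.
  split.
  - exists (psumZ (fun k => Cnorm2 (e1 k)) 1). apply sumZ_finite.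
    intros j Hj. unfold e1. replace (j =? 1)%Z with false by (symmetry; apply Z.eqb_neq; lia).
    unfold Cnorm2, Czero; simpl; ring.
  - intros n. unfold e1. replace (2 * n =? 1)%Z with false by (symmetry; apply Z.eqb_neq; lia).
    reflexivity.
Qed.

Lemma not_hyper : ~ M_hypercyclic Fshift inM.
Proof.
  intros [x [Hx H]].
  destruct (classic (forall k, Cnorm2 (x k) = 0)) as [Hz|Hnz].
  - destruct (H e1 e1_inM (1/2)) as [n [_ [l [Hl Hsl]]]]; [lra|].
    set (f := fun k => Cnorm2 (Csub (Nat.iter n Fshift x k) (e1 k))) in Hl.
    assert (1 <= l).
    { apply Rle_trans with (f 1%Z); [|apply term_le_lim; auto; intros; apply Cnorm2_nonneg].
      unfold f. assert (Cnorm2 (Nat.iter n Fshift x 1%Z) = 0).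
      { apply Rle_antisym; [|apply Cnorm2_nonneg].
        clear - Hz. revert n. assert (forall n j, Cnorm2 (Nat.iter n Fshift x j) = 0); [|intros n; rewrite H; lra].
        induction n as [|n IH]; intros j; simpl; [apply Hz|].
        unfold Fshift at 1. rewrite Cnorm2_RCmul, IH. ring. }
      revert H0. unfold Cnorm2, Csub, e1. simpl. destruct (Nat.iter n Fshift x 1%Z) as [a b]; simpl.
      intros. nra. }
    assert (1 <= sqrt l) by (rewrite <- sqrt_1; apply sqrt_le_1_alt; lra). lra.
  - apply not_all_ex_not in Hnz. destruct Hnz as [k Hk].
    pose proof (Cnorm2_nonneg (x k)).
    set (c := Cnorm2 (x k)).
    assert (0 < c) by (unfold c in *; lra).
    destruct (H _ zero_inM (sqrt c)) as [n [_ [l [Hl Hsl]]]]; [apply sqrt_lt_R0; lra|].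
    set (f := fun j => Cnorm2 (Csub (Nat.iter n Fshift x j) Czero)) in Hl.
    assert (c <= l).
    { apply Rle_trans with (f (k + Z.of_nat n)%Z); [|apply term_le_lim; auto; intros; apply Cnorm2_nonneg].
      unfold f. pose proof (iter_F_ge n x (k + Z.of_nat n)%Z).
      replace (k + Z.of_nat n - Z.of_nat n)%Z with k in H2 by lia.
      replace (Cnorm2 (Csub (Nat.iter n Fshift x (k + Z.of_nat n)%Z) Czero))
        with (Cnorm2 (Nat.iter n Fshift x (k + Z.of_nat n)%Z)); [unfold c; lra|].
      unfold Cnorm2, Csub, Czero; simpl; ring. }
    assert (sqrt c <= sqrt l) by (apply sqrt_le_1_alt; lra). lra.
Qed.

Definition q : R := sqrt (3/4).
Lemma q_pos : 0 < q.
Proof. unfold q; apply sqrt_lt_R0; lra. Qed.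
Lemma qq : q * q = 3/4.
Proof. unfold q; apply sqrt_sqrt; lra. Qed.
Definition s : R := 3 / q.

Definition pw (j : Z) : R := q ^ Z.abs_nat j.
Lemma pw_pos j : 0 < pw j.
Proof. unfold pw; apply pow_lt, q_pos. Qed.

Lemma w_eq a : w a = s * (pw (a + 1) / pw a).
Proof.
  pose proof q_pos. pose proof qq. unfold w, pw, s.
  destruct (0 <=? a)%Z eqn:E.
  - apply Z.leb_le in E. replace (Z.abs_nat (a+1)) with (S (Z.abs_nat a)) by lia.
    simpl. pose proof (pow_lt q (Z.abs_nat a) H). field. lra.
  - apply Z.leb_gt in E. replace (Z.abs_nat a) with (S (Z.abs_nat (a+1))) by lia.
    simpl. pose proof (pow_lt q (Z.abs_nat (a+1)) H).
    replace (3 / q * (q ^ Z.abs_nat (a + 1) / (q * q ^ Z.abs_nat (a + 1)))) with (3 / (q*q)) by (field; lra).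
    rewrite H0. lra.
Qed.

Lemma RCmul_RCmul a b v : RCmul a (RCmul b v) = RCmul (a * b) v.
Proof. unfold RCmul; simpl; f_equal; ring. Qed.

Lemma RCmul_1 v : RCmul 1 v = v.
Proof. destruct v; unfold RCmul; simpl; f_equal; ring. Qed.

Lemma iter_formula n a j : Nat.iter n Fshift a j =
  RCmul (s ^ n * (pw j / pw (j - Z.of_nat n))) (a (j - Z.of_nat n)%Z).
Proof.
  revert j; induction n as [|n IH]; intros j.
  - simpl. replace (j - 0)%Z with j by lia. pose proof (pw_pos j).
    replace (1 * (pw j / pw j)) with 1 by (field; lra). rewrite RCmul_1; reflexivity.
  - simpl Nat.iter. unfold Fshift at 1. rewrite IH, RCmul_RCmul, w_eq.
    replace (j - 1 + 1)%Z with j by lia.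
    replace (j - 1 - Z.of_nat n)%Z with (j - Z.of_nat (S n))%Z by lia.
    f_equal. pose proof (pw_pos j). pose proof (pw_pos (j-1)). pose proof (pw_pos (j - Z.of_nat (S n))).
    rewrite <- tech_pow_Rmult. field. split; lra.
Qed.

Definition sndof (u : nat) : nat := snd (Cantor.of_nat u).
Definition digit (n t : nat) : nat := fst (Cantor.of_nat (Nat.iter n sndof t)).
Definition valr (m d : nat) : R :=
  (INR (fst (Cantor.of_nat d)) - INR (snd (Cantor.of_nat d))) / INR (S m).
Definition tgt (m t : nat) : seqZ := fun k =>
  if ((Z.abs k <=? Z.of_nat m)%Z && Z.odd k)%bool then
    (valr m (digit (2 * Z.to_nat (k + Z.of_nat m)) t),
     valr m (digit (S (2 * Z.to_nat (k + Z.of_nat m))) t))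
  else Czero.
Definition tg (h : nat) : seqZ :=
  tgt (fst (Cantor.of_nat (fst (Cantor.of_nat h)))) (snd (Cantor.of_nat (fst (Cantor.of_nat h)))).

Lemma of_nat_sum n : (fst (Cantor.of_nat n) + snd (Cantor.of_nat n) <= n)%nat.
Proof.
  pose proof (cancel_to_of n) as E. destruct (Cantor.of_nat n) as [x y]. simpl fst; simpl snd.
  pose proof (to_nat_non_decreasing x y). lia.
Qed.

Lemma digit_le n t : (digit n t <= t)%nat.
Proof.
  unfold digit. pose proof (of_nat_sum (Nat.iter n sndof t)).
  enough (Nat.iter n sndof t <= t)%nat by lia.
  induction n as [|n IH]; simpl; [lia|]. unfold sndof at 1.
  pose proof (of_nat_sum (Nat.iter n sndof t)). lia.
Qed.

Lemma valr_sq m d : valr m d * valr m d <= INR d * INR d.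
Proof.
  unfold valr. pose proof (of_nat_sum d).
  destruct (Cantor.of_nat d) as [u v]; simpl fst in *; simpl snd in *.
  set (M := INR (S m)). assert (1 <= M) by (unfold M; rewrite S_INR; pose proof (pos_INR m); lra).
  apply le_INR in H. rewrite plus_INR in H. pose proof (pos_INR u). pose proof (pos_INR v).
  set (a := INR u - INR v).
  assert (- INR d <= a <= INR d) by (unfold a; lra).
  assert (0 < / M <= 1) by (split; [apply Rinv_0_lt_compat; lra| rewrite <- Rinv_1; apply Rinv_le_contravar; lra]).
  replace (a / M * (a / M)) with (a * a * (/ M * / M)) by (field; lra).
  assert (0 <= / M * / M <= 1) by nra. assert (a * a <= INR d * INR d) by nra. nra.
Qed.

Lemma tgt_bound m t k : Cnorm2 (tgt m t k) <= 2 * INR t ^ 2.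
Proof.
  unfold tgt. destruct (_ && _)%bool.
  - unfold Cnorm2; cbn [fst snd].
    set (d1 := digit _ t). set (d2 := digit _ t).
    pose proof (valr_sq m d1). pose proof (valr_sq m d2).
    pose proof (le_INR _ _ (digit_le (2 * Z.to_nat (k + Z.of_nat m)) t)).
    pose proof (le_INR _ _ (digit_le (S (2 * Z.to_nat (k + Z.of_nat m))) t)).
    fold d1 d2 in H1, H2. pose proof (pos_INR d1). pose proof (pos_INR d2).
    replace (INR t ^ 2) with (INR t * INR t) by ring. nra.
  - unfold Cnorm2, Czero; simpl. pose proof (pos_INR t). nra.
Qed.

Lemma nat_le_pow2 h : (h <= 2 ^ h)%nat.
Proof. pose proof (Nat.pow_gt_lin_r 2 h ltac:(lia)); lia. Qed.

Lemma tg_bound h k : Cnorm2 (tg h k) <= 2 * 4 ^ h.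
Proof.
  unfold tg. eapply Rle_trans; [apply tgt_bound|].
  set (t := snd _). assert (t <= h)%nat.
  { unfold t. pose proof (of_nat_sum (fst (Cantor.of_nat h))). pose proof (of_nat_sum h). lia. }
  pose proof (nat_le_pow2 h). apply le_INR in H. apply le_INR in H0. rewrite pow_INR in H0.
  replace (INR 2) with 2 in H0 by reflexivity. pose proof (pos_INR t).
  replace (4 ^ h) with (2 ^ h * 2 ^ h) by (rewrite <- Rpow_mult_distr; f_equal; lra).
  simpl. nra.
Qed.

Lemma tg_out h k : (Z.of_nat h < Z.abs k)%Z -> tg h k = Czero.
Proof.
  intros Hk. unfold tg, tgt.
  pose proof (of_nat_sum (fst (Cantor.of_nat h))). pose proof (of_nat_sum h).
  replace (Z.abs k <=? _)%Z with false; [reflexivity|]. symmetry; apply Z.leb_gt. lia.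
Qed.

Lemma tg_even h n : tg h (2 * n)%Z = Czero.
Proof.
  unfold tg, tgt. rewrite Z.odd_mul. simpl. rewrite Bool.andb_false_r. reflexivity.
Qed.

Lemma tg_pair m t b : tg (Cantor.to_nat (Cantor.to_nat (m, t), b)) = tgt m t.
Proof. unfold tg. rewrite cancel_of_to. cbn [fst]. rewrite cancel_of_to. reflexivity. Qed.

Lemma enc_exists L (c : nat -> nat) : exists t, forall n, (n < L)%nat -> digit n t = c n.
Proof.
  revert c; induction L as [|L IH]; intros c.
  - exists 0%nat. intros; lia.
  - destruct (IH (fun n => c (S n))) as [t' Ht'].
    exists (Cantor.to_nat (c 0%nat, t')). intros [|n] Hn.
    + unfold digit. replace (Nat.iter 0 sndof (Cantor.to_nat (c 0%nat, t'))) with (Cantor.to_nat (c 0%nat, t')) by reflexivity. rewrite cancel_of_to. reflexivity.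
    + unfold digit. rewrite Nat.iter_succ_r. unfold sndof at 2. rewrite cancel_of_to. cbn [snd].
      apply (Ht' n). lia.
Qed.

Definition code (m : nat) (r : R) : nat :=
  Cantor.to_nat (Z.to_nat (up (r * INR (S m))), Z.to_nat (- up (r * INR (S m)))).

Lemma INR_IZR_split z : INR (Z.to_nat z) - INR (Z.to_nat (- z)) = IZR z.
Proof.
  rewrite !INR_IZR_INZ. destruct (Z_le_gt_dec 0 z).
  - rewrite Z2Nat.id by lia. replace (Z.to_nat (-z)) with 0%nat by lia. simpl. lra.
  - replace (Z.to_nat z) with 0%nat by lia. rewrite Z2Nat.id by lia. simpl.
    rewrite opp_IZR. lra.
Qed.

Lemma approx m r : (r - valr m (code m r)) ^ 2 <= 1 / INR (S m).
Proof.
  unfold valr, code. rewrite cancel_of_to. cbn [fst snd]. rewrite INR_IZR_split.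
  set (M := INR (S m)). assert (1 <= M) by (unfold M; rewrite S_INR; pose proof (pos_INR m); lra).
  destruct (archimed (r * M)) as [H1 H2].
  set (z := IZR (up (r * M))) in *.
  replace ((r - z / M)^2) with ((r * M - z)^2 * (/ M * / M)) by (field; lra).
  assert ((r * M - z)^2 <= 1) by (simpl; nra).
  assert (0 < / M <= 1) by (split; [apply Rinv_0_lt_compat; lra| rewrite <- Rinv_1; apply Rinv_le_contravar; lra]).
  assert (0 <= (r * M - z) ^ 2) by (apply pow2_ge_0).
  unfold Rdiv. rewrite Rmult_1_l. nra.
Qed.

Definition p (h : nat) : nat := (48 * 4 ^ h)%nat.
Definition InWin (h : nat) (i : Z) : Prop := (Z.abs (i + 2 * Z.of_nat (p h)) <= Z.of_nat h)%Z.

Lemma pow4_lin h : (h < 4 ^ h)%nat.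
Proof. apply Nat.pow_gt_lin_r; lia. Qed.

Lemma pow4_mono g h : (g < h)%nat -> (4 * 4 ^ g <= 4 ^ h)%nat.
Proof.
  intros H. change (4 * 4 ^ g)%nat with (4 ^ S g)%nat. apply Nat.pow_le_mono_r; lia.
Qed.

Lemma win_unique g h i : InWin g i -> InWin h i -> g = h.
Proof.
  unfold InWin, p. intros Hg Hh.
  destruct (lt_eq_lt_dec g h) as [[Hlt|Heq]|Hlt]; auto.
  - pose proof (pow4_mono g h Hlt). pose proof (pow4_lin g). pose proof (pow4_lin h). lia.
  - pose proof (pow4_mono h g Hlt). pose proof (pow4_lin g). pose proof (pow4_lin h). lia.
Qed.

Lemma dist_lemma g h k : g <> h -> (Z.abs k <= Z.of_nat h)%Z ->
  (Z.of_nat (p (Nat.max g h)) <= Z.abs (k + 2 * Z.of_nat (p g) - 2 * Z.of_nat (p h)))%Z.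
Proof.
  unfold p. intros Hne Hk. pose proof (pow4_lin g). pose proof (pow4_lin h).
  destruct (lt_eq_lt_dec g h) as [[Hlt|Heq]|Hlt]; [|lia|].
  - rewrite Nat.max_r by lia. pose proof (pow4_mono g h Hlt). lia.
  - rewrite Nat.max_l by lia. pose proof (pow4_mono h g Hlt). lia.
Qed.

Lemma dist0 h k : (Z.abs k <= Z.of_nat h)%Z ->
  (Z.of_nat (p h) <= Z.abs (k - 2 * Z.of_nat (p h)))%Z.
Proof. unfold p. intros. pose proof (pow4_lin h). lia. Qed.

Definition xval (h : nat) (i : Z) : Defs.C :=
  RCmul (pw i / pw (i + 2 * Z.of_nat (p h))%Z) (tg h (i + 2 * Z.of_nat (p h))%Z).

Definition X (i : Z) : Defs.C :=
  match excluded_middle_informative (exists h, InWin h i) with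
  | left H => xval (proj1_sig (constructive_indefinite_description _ H)) i
  | right _ => Czero
  end.

Lemma X_win h i : InWin h i -> X i = xval h i.
Proof.
  intros Hh. unfold X. destruct excluded_middle_informative as [H|H].
  - destruct (constructive_indefinite_description _ H) as [h' Hh']. simpl.
    rewrite (win_unique h' h i); auto.
  - exfalso; apply H; eauto.
Qed.

Lemma X_nowin i : ~ (exists h, InWin h i) -> X i = Czero.
Proof.
  intros Hn. unfold X. destruct excluded_middle_informative as [H|H]; [contradiction|reflexivity].
Qed.

Lemma RCmul_0 c : RCmul c Czero = Czero.
Proof. unfold RCmul, Czero; simpl; f_equal; ring. Qed.

Lemma half_pow_le a b : (b <= a)%nat -> (/2) ^ a <= (/2) ^ b.
Proof.
  intros H. rewrite !pow_inv. apply Rinv_le_contravar.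
  - apply pow_lt; lra.
  - apply Rle_pow; [lra|auto].
Qed.

Lemma num H : (6/7) ^ (p H) * (2 * (16/3) ^ H) <= (/2) ^ H.
Proof.
  unfold p. replace (48 * 4 ^ H)%nat with (6 * (8 * 4 ^ H))%nat by lia.
  rewrite pow_mult.
  assert (0 <= (6/7)^6 <= /2) by (simpl; lra).
  assert (((6/7)^6) ^ (8 * 4^H) <= (/2) ^ (8 * 4 ^ H)) by (apply pow_incr; lra).
  assert ((/2) ^ (8 * 4 ^ H) <= (/2) ^ (5 * H + 1)).
  { apply half_pow_le. pose proof (pow4_lin H). lia. }
  assert ((/2) ^ (5 * H + 1) * (2 * (16/3) ^ H) = (/6) ^ H).
  { rewrite pow_add, pow_mult, pow_1.
    replace (((/2) ^ 5) ^ H * / 2 * (2 * (16 / 3) ^ H)) with (((/2)^5) ^ H * (16/3)^H) by (field).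
    rewrite <- Rpow_mult_distr. f_equal. simpl. field. }
  assert ((/6) ^ H <= (/2) ^ H) by (apply pow_incr; lra).
  assert (0 <= 2 * (16/3)^H) by (pose proof (pow_le (16/3) H); lra).
  nra.
Qed.

Lemma pow_le1 x n : 0 <= x <= 1 -> x ^ n <= 1.
Proof. intros Hx; induction n; simpl; [lra|]. pose proof (pow_le x n). nra. Qed.

Lemma pow_dec x a b : 0 <= x <= 1 -> (b <= a)%nat -> x ^ a <= x ^ b.
Proof.
  intros Hx Hab. replace a with (b + (a - b))%nat by lia. rewrite pow_add.
  pose proof (pow_le1 x (a - b) Hx). pose proof (pow_le x b). nra.
Qed.

Lemma est j k h H : (Z.abs k <= Z.of_nat h)%Z -> (h <= H)%nat -> (Z.of_nat (p H) <= Z.abs j)%Z ->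
  Cnorm2 (RCmul (pw j / pw k) (tg h k)) <= (/2)^H * Env j.
Proof.
  intros Hk HhH Hj. rewrite Cnorm2_RCmul.
  set (J := Z.abs_nat j). set (K := Z.abs_nat k).
  pose proof q_pos as Hq.
  assert (pw j / pw k * (pw j / pw k) = (3/4)^J * / (3/4)^K) as ->.
  { unfold pw. fold J K. rewrite <- qq, !Rpow_mult_distr. pose proof (pow_lt q K Hq). field. lra. }
  assert ((3/4)^J = Env j * (6/7)^J) as ->.
  { unfold Env. fold J. rewrite <- Rpow_mult_distr. f_equal. lra. }
  assert (/ (3/4)^K = (4/3)^K) as ->.
  { rewrite <- pow_inv. f_equal. field. }
  assert ((6/7)^J <= (6/7)^(p H)) by (apply pow_dec; [lra| unfold J; lia]).
  assert ((4/3)^K <= (4/3)^h) by (apply Rle_pow; [lra| unfold K; lia]).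
  pose proof (tg_bound h k). pose proof (Cnorm2_nonneg (tg h k)).
  assert ((4/3)^h * (2 * 4^h) = 2 * (16/3)^h) by (replace (16/3) with (4/3*4) by lra; rewrite Rpow_mult_distr; ring).
  assert ((16/3)^h <= (16/3)^H) by (apply Rle_pow; [lra|auto]).
  pose proof (num H).
  pose proof (Env_pos j). pose proof (pow_le (6/7) J ltac:(lra)). pose proof (pow_le (4/3) K ltac:(lra)).
  pose proof (pow_le (4/3) h ltac:(lra)). pose proof (pow_le (6/7) (p H) ltac:(lra)).
  assert ((4/3)^K * Cnorm2 (tg h k) <= 2 * (16/3)^H).
  { apply Rle_trans with ((4/3)^h * (2 * 4^h)). apply Rmult_le_compat; auto. lra. }
  assert ((6/7)^J * ((4/3)^K * Cnorm2 (tg h k)) <= (/2)^H).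
  { apply Rle_trans with ((6/7)^(p H) * (2 * (16/3)^H)); [|auto].
    apply Rmult_le_compat; auto. apply Rmult_le_pos; auto. }
  assert (0 <= (6/7)^J * ((4/3)^K * Cnorm2 (tg h k))) by (apply Rmult_le_pos; auto; apply Rmult_le_pos; auto).
  replace (Env j * (6 / 7) ^ J * (4 / 3) ^ K * Cnorm2 (tg h k)) with (Env j * ((6/7)^J * ((4/3)^K * Cnorm2 (tg h k)))) by ring.
  nra.
Qed.

Definition alpha (g : nat) : Defs.C := ((/ s) ^ (2 * p g), 0).
Definition Zs (g : nat) : seqZ := scal (alpha g) (Nat.iter (2 * p g) Fshift X).

Lemma s_pos : 0 < s.
Proof. unfold s. pose proof q_pos. apply Rdiv_lt_0_compat; lra. Qed.

Lemma Zs_formula g j : Zs g j =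
  RCmul (pw j / pw (j - 2 * Z.of_nat (p g))%Z) (X (j - 2 * Z.of_nat (p g))%Z).
Proof.
  unfold Zs, scal, alpha. rewrite iter_formula.
  replace (Z.of_nat (2 * p g)) with (2 * Z.of_nat (p g))%Z by lia.
  set (c := pw j / pw (j - 2 * Z.of_nat (p g))%Z). set (v := X _).
  pose proof s_pos.
  assert ((/ s) ^ (2 * p g) * s ^ (2 * p g) = 1).
  { rewrite <- Rpow_mult_distr. rewrite Rinv_l by lra. apply pow1. }
  unfold Cmul, RCmul; cbn [fst snd]. f_equal.
  - rewrite <- (Rmult_1_l (c * fst v)), <- H0. ring.
  - rewrite <- (Rmult_1_l (c * snd v)), <- H0. ring.
Qed.

Lemma case3 g j : Zs g j = tg g j \/
  (tg g j = Czero /\ Cnorm2 (Zs g j) <= (/2)^g * Env j).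
Proof.
  rewrite Zs_formula. set (i := (j - 2 * Z.of_nat (p g))%Z).
  assert (Hjn : ~ InWin g i -> tg g j = Czero).
  { intros Hn. apply tg_out. unfold InWin, i in Hn. lia. }
  destruct (classic (exists h, InWin h i)) as [[h Hh]|Hn].
  - rewrite (X_win h i Hh). unfold xval. rewrite RCmul_RCmul.
    set (k := (i + 2 * Z.of_nat (p h))%Z).
    assert (pw j / pw i * (pw i / pw k) = pw j / pw k) as ->.
    { pose proof (pw_pos i). pose proof (pw_pos k). field. lra. }
    destruct (Nat.eq_dec h g) as [->|Hne].
    + left. assert (k = j) as -> by (unfold k, i; lia).
      pose proof (pw_pos j). replace (pw j / pw j) with 1 by (field; lra). apply RCmul_1.
    + right. split.
      * apply Hjn. intros Hg. apply Hne. eapply win_unique; eauto.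
      * destruct (Z_le_gt_dec (Z.abs k) (Z.of_nat h)) as [Hk|Hk].
        -- eapply Rle_trans. apply (est j k h (Nat.max g h)); [auto|lia|].
           { pose proof (dist_lemma g h k (fun e => Hne (eq_sym e)) Hk).
             replace j with (k + 2 * Z.of_nat (p g) - 2 * Z.of_nat (p h))%Z by (unfold k, i; lia). auto. }
           pose proof (Env_pos j). pose proof (half_pow_le (Nat.max g h) g ltac:(lia)). nra.
        -- rewrite (tg_out h k) by lia. rewrite RCmul_0. unfold Cnorm2, Czero; simpl.
           pose proof (Env_pos j). pose proof (pow_lt (/2) g ltac:(lra)). nra.
  - left. rewrite (X_nowin i Hn), RCmul_0. symmetry. apply Hjn. intros Hg; apply Hn; eauto.
Qed.

Lemma X_bound i : Cnorm2 (X i) <= Env i.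
Proof.
  destruct (classic (exists h, InWin h i)) as [[h Hh]|Hn].
  - rewrite (X_win h i Hh). unfold xval.
    set (k := (i + 2 * Z.of_nat (p h))%Z).
    destruct (Z_le_gt_dec (Z.abs k) (Z.of_nat h)) as [Hk|Hk].
    + eapply Rle_trans. apply (est i k h h); [auto|lia|].
      { pose proof (dist0 h k Hk). replace i with (k - 2 * Z.of_nat (p h))%Z by (unfold k; lia). auto. }
      pose proof (Env_pos i). pose proof (pow_le1 (/2) h ltac:(lra)). pose proof (pow_le (/2) h ltac:(lra)). nra.
    + rewrite (tg_out h k) by lia. rewrite RCmul_0. unfold Cnorm2, Czero; simpl.
      pose proof (Env_pos i). lra.
  - rewrite (X_nowin i Hn). unfold Cnorm2, Czero; simpl. pose proof (Env_pos i). lra.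
Qed.

Lemma X_l2 : in_l2 X.
Proof.
  destruct (sumZ_env (fun k => Cnorm2 (X k)) 1) as [l [Hl _]].
  - intros; apply Cnorm2_nonneg.
  - intros j. rewrite Rmult_1_l. apply X_bound.
  - lra.
  - exists l; exact Hl.
Qed.

Lemma X_even n : X (2 * n)%Z = Czero.
Proof.
  destruct (classic (exists h, InWin h (2 * n)%Z)) as [[h Hh]|Hn].
  - rewrite (X_win h _ Hh). unfold xval.
    replace (2 * n + 2 * Z.of_nat (p h))%Z with (2 * (n + Z.of_nat (p h)))%Z by lia.
    rewrite tg_even. apply RCmul_0.
  - apply X_nowin; auto.
Qed.

Lemma Zs_even g n : Zs g (2 * n)%Z = Czero.
Proof.
  rewrite Zs_formula. replace (2 * n - 2 * Z.of_nat (p g))%Z with (2 * (n - Z.of_nat (p g)))%Z by lia.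
  rewrite X_even. apply RCmul_0.
Qed.

Lemma d1 i : ((2 * i) / 2 = i)%nat.
Proof. rewrite Nat.mul_comm. apply Nat.div_mul. lia. Qed.
Lemma d2 i : ((S (2 * i)) / 2 = i)%nat.
Proof. replace (S (2*i)) with (i * 2 + 1)%nat by lia. rewrite Nat.div_add_l by lia. simpl. lia. Qed.

Definition cdig (y : seqZ) (m N : nat) (n : nat) : nat :=
  let k := (Z.of_nat (n / 2) - Z.of_nat m)%Z in
  if (Z.abs k <=? Z.of_nat N)%Z then code m (if Nat.even n then fst (y k) else snd (y k)) else 0%nat.

Lemma valr_0 m : valr m 0 = 0.
Proof. unfold valr. simpl fst; simpl snd. simpl INR. unfold Rdiv. ring. Qed.

Lemma tgt_val y m N t k : (N <= m)%nat ->
  (forall n, (n < 2 * (2 * m + 1) + 2)%nat -> digit n t = cdig y m N n) ->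
  (Z.abs k <= Z.of_nat m)%Z -> Z.odd k = true ->
  tgt m t k = if (Z.abs k <=? Z.of_nat N)%Z
              then (valr m (code m (fst (y k))), valr m (code m (snd (y k))))
              else (0, 0).
Proof.
  intros HNm Hd Hk Ho. unfold tgt.
  replace (Z.abs k <=? Z.of_nat m)%Z with true by (symmetry; apply Z.leb_le; lia).
  rewrite Ho. simpl andb.
  set (idx := Z.to_nat (k + Z.of_nat m)).
  assert (Hidx : (idx <= 2 * m)%nat) by (unfold idx; lia).
  rewrite !Hd by lia. unfold cdig. rewrite d1, d2.
  replace (Z.of_nat idx - Z.of_nat m)%Z with k by (unfold idx; lia).
  assert (E1 : Nat.even (2 * idx) = true) by (rewrite Nat.even_mul; reflexivity).
  assert (E2 : Nat.even (S (2 * idx)) = false) by (rewrite Nat.even_succ, Nat.odd_mul; reflexivity).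
  rewrite E1, E2.
  destruct (Z.abs k <=? Z.of_nat N)%Z; [reflexivity|]. rewrite valr_0. reflexivity.
Qed.

Lemma psumZ_const c N : psumZ (fun _ => c) N = (2 * INR N + 1) * c.
Proof.
  induction N as [|N IH]; [rewrite psumZ_0; simpl; ring|].
  rewrite psumZ_S, IH, S_INR. ring.
Qed.

Lemma ind_sum c N M : 0 <= c ->
  psumZ (fun k => if (Z.abs k <=? Z.of_nat N)%Z then c else 0) M <= (2 * INR N + 1) * c.
Proof.
  intros Hc. set (f := fun k => if (Z.abs k <=? Z.of_nat N)%Z then c else 0).
  assert (Hf : forall j, 0 <= f j) by (intros; unfold f; destruct (_ <=? _)%Z; lra).
  assert (sumZ_is f (psumZ f N)).
  { apply sumZ_finite. intros j Hj. unfold f. replace (Z.abs j <=? Z.of_nat N)%Z with false; [reflexivity|].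
    symmetry; apply Z.leb_gt; lia. }
  eapply Rle_trans. apply (psumZ_le_lim f _ M Hf H).
  rewrite (psumZ_ext_loc f (fun _ => c)); [rewrite psumZ_const; lra|].
  intros j Hj. unfold f. replace (Z.abs j <=? Z.of_nat N)%Z with true; [reflexivity|].
  symmetry; apply Z.leb_le; lia.
Qed.

Lemma Cnorm2_Csub_tri a b c : Cnorm2 (Csub a c) <= 2 * Cnorm2 (Csub a b) + 2 * Cnorm2 (Csub b c).
Proof.
  destruct a as [a1 a2]; destruct b as [b1 b2]; destruct c as [c1 c2].
  unfold Cnorm2, Csub; simpl. pose proof (Rle_0_sqr (a1 - 2*b1 + c1)). pose proof (Rle_0_sqr (a2 - 2*b2 + c2)). unfold Rsqr in *. nra.
Qed.

Lemma q_lt1 : q < 1.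
Proof. pose proof q_pos. pose proof qq. nra. Qed.

Lemma alpha_norm g : Cnorm2 (alpha g) <= 1.
Proof.
  unfold Cnorm2, alpha; cbn [fst snd].
  pose proof q_pos. pose proof q_lt1.
  assert (s * q = 3) by (unfold s; field; lra).
  assert (3 <= s) by nra.
  assert (0 <= / s <= 1) by (split; [left; apply Rinv_0_lt_compat; lra| rewrite <- Rinv_1; apply Rinv_le_contravar; lra]).
  pose proof (pow_le1 (/ s) (2 * p g) H3). pose proof (pow_le (/ s) (2 * p g) (proj1 H3)). nra.
Qed.

Lemma Zs_l2 g : in_l2 (Zs g).
Proof.
  set (ft := fun k => Cnorm2 (tg g k)).
  assert (Ht : sumZ_is ft (psumZ ft g)).
  { apply sumZ_finite. intros j Hj. unfold ft. rewrite tg_out by lia. unfold Cnorm2, Czero; simpl; ring. }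
  assert (Hft : forall j, 0 <= ft j) by (intros; apply Cnorm2_nonneg).
  destruct (sumZ_bounded (fun k => Cnorm2 (Zs g k)) (psumZ ft g + (/2)^g * 15)) as [l [Hl _]].
  - intros; apply Cnorm2_nonneg.
  - intros N. eapply Rle_trans.
    + apply (psumZ_le _ (fun k => ft k + (/2)^g * Env k)). intros j. unfold ft.
      destruct (case3 g j) as [->|[-> Hb]].
      * pose proof (Env_pos j). pose proof (pow_le (/2) g ltac:(lra)). nra.
      * unfold Cnorm2 at 2, Czero; simpl. lra.
    + rewrite psumZ_plus, psumZ_scal, psumZ_Env.
      pose proof (psumZ_le_lim ft _ N Hft Ht). pose proof (pow_le (/2) g ltac:(lra)).
      pose proof (pow_le (7/8) N ltac:(lra)). nra.
  - exists l; exact Hl.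
Qed.

Lemma Zs_M g : inM (Zs g).
Proof. split; [apply Zs_l2| intros n; apply Zs_even]. Qed.

Lemma dbound y m N t k : (forall n, y (2 * n)%Z = Czero) -> (N <= m)%nat ->
  (forall n, (n < 2 * (2 * m + 1) + 2)%nat -> digit n t = cdig y m N n) ->
  Cnorm2 (Csub (tgt m t k) (y k)) <=
    (if (Z.abs k <=? Z.of_nat N)%Z then 2 / INR (S m) else 0) + tailZ N (fun k => Cnorm2 (y k)) k.
Proof.
  intros Hev HNm Hd.
  assert (HM : 0 < INR (S m)) by (rewrite S_INR; pose proof (pos_INR m); lra).
  assert (Hz : forall a, Cnorm2 (Csub (0, 0) a) = Cnorm2 a) by (intros [a b]; unfold Cnorm2, Csub; simpl; ring).
  unfold tailZ.
  destruct (Z.odd k) eqn:Ho.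
  - destruct (Z_le_gt_dec (Z.abs k) (Z.of_nat m)) as [Hk|Hk].
    + rewrite (tgt_val y m N t k HNm Hd Hk Ho).
      destruct (Z.abs k <=? Z.of_nat N)%Z eqn:E.
      * pose proof (approx m (fst (y k))) as A1. pose proof (approx m (snd (y k))) as A2.
        destruct (y k) as [a b]. unfold Cnorm2, Csub; cbn [fst snd] in *.
        assert (2 / INR (S m) = 1 / INR (S m) + 1 / INR (S m)) as -> by (field; lra).
        cbn [pow] in A1, A2. rewrite !Rmult_1_r in A1, A2. nra.
      * rewrite Hz. lra.
    + unfold tgt. replace (Z.abs k <=? Z.of_nat m)%Z with false by (symmetry; apply Z.leb_gt; lia).
      replace (Z.abs k <=? Z.of_nat N)%Z with false by (symmetry; apply Z.leb_gt; lia).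
      simpl andb. unfold Czero. rewrite Hz. lra.
  - unfold tgt. rewrite Ho, Bool.andb_false_r.
    assert (k = 2 * Z.div2 k)%Z as Ek by (rewrite (Z.div2_odd k) at 1; rewrite Ho; simpl; lia).
    rewrite Ek, Hev.
    replace (Cnorm2 (Csub Czero Czero)) with 0 by (unfold Cnorm2, Csub, Czero; cbn [fst snd]; ring).
    replace (Cnorm2 Czero) with 0 by (unfold Cnorm2, Czero; cbn [fst snd]; ring).
    assert (0 <= 2 / INR (S m)) by (unfold Rdiv; apply Rmult_le_pos; [lra|left; apply Rinv_0_lt_compat; lra]).
    destruct (Z.abs (2 * Z.div2 k) <=? Z.of_nat N)%Z; lra.
Qed.

Lemma ebound g k : Cnorm2 (Csub (Zs g k) (tg g k)) <= (/2)^g * Env k.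
Proof.
  pose proof (Env_pos k). pose proof (pow_le (/2) g ltac:(lra)).
  destruct (case3 g k) as [->|[-> Hb]].
  - destruct (tg g k) as [a b]; unfold Cnorm2, Csub; simpl. nra.
  - replace (Cnorm2 (Csub (Zs g k) Czero)) with (Cnorm2 (Zs g k)); [auto|].
    destruct (Zs g k); unfold Cnorm2, Csub, Czero; simpl; ring.
Qed.

Lemma dense y eps : inM y -> 0 < eps -> exists g, l2dist_lt (Zs g) y eps.
Proof.
  intros [[l Hl] Hev] Heps.
  set (f := fun k => Cnorm2 (y k)).
  assert (Hf : forall j, 0 <= f j) by (intros; apply Cnorm2_nonneg).
  set (e2 := eps * eps / 8).
  assert (He2 : 0 < e2) by (unfold e2; nra).
  destruct (Hl e2 He2) as [N HN]. specialize (HN N (le_n N)). unfold R_dist in HN.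
  pose proof (psumZ_le_lim f l N Hf Hl) as HlN.
  assert (Htail : l - psumZ f N < e2).
  { assert (psumZ f N - l <= 0) by lra. unfold f in *. rewrite Rabs_left1 in HN by lra. lra. }
  set (X0 := 2 * (2 * INR N + 1) / e2).
  assert (HX0 : 0 < X0) by (unfold X0; pose proof (pos_INR N); apply Rdiv_lt_0_compat; lra).
  destruct (archimed X0) as [Hz1 _].
  set (z := up X0) in *.
  assert (Hzp : (0 < z)%Z) by (apply lt_IZR; lra).
  set (m := Nat.max N (Z.to_nat z)).
  assert (HM : X0 < INR (S m)).
  { rewrite S_INR. assert (Z.to_nat z <= m)%nat by (unfold m; lia).
    apply le_INR in H. rewrite INR_IZR_INZ, Z2Nat.id in H by lia. lra. }
  assert (Hdel : (2 * INR N + 1) * (2 / INR (S m)) < e2).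
  { assert (0 < INR (S m)) by lra. unfold X0 in HM.
    apply Rmult_lt_reg_r with (INR (S m)); auto.
    replace ((2 * INR N + 1) * (2 / INR (S m)) * INR (S m)) with (2 * (2 * INR N + 1)) by (field; lra).
    apply Rmult_lt_compat_l with (r := e2) in HM; auto.
    replace (e2 * (2 * (2 * INR N + 1) / e2)) with (2 * (2 * INR N + 1)) in HM by (field; lra). lra. }
  destruct (enc_exists (2 * (2 * m + 1) + 2) (cdig y m N)) as [t Ht].
  destruct (pow_lt_1_zero (/2) ltac:(rewrite Rabs_right; lra) (e2 / 30) ltac:(lra)) as [B HB].
  set (g := Cantor.to_nat (Cantor.to_nat (m, t), B)).
  assert (HgB : (B <= g)%nat) by (unfold g; pose proof (to_nat_non_decreasing (Cantor.to_nat (m, t)) B); lia).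
  specialize (HB g HgB). rewrite Rabs_right in HB by (apply Rle_ge, pow_le; lra).
  assert (Htg : tg g = tgt m t) by apply tg_pair.
  exists g.
  set (bound := 30 * (/2)^g + 2 * ((2 * INR N + 1) * (2 / INR (S m))) + 2 * (l - psumZ f N)).
  destruct (sumZ_bounded (fun k => Cnorm2 (Csub (Zs g k) (y k))) bound) as [L [HL HLb]].
  - intros; apply Cnorm2_nonneg.
  - intros M. eapply Rle_trans.
    + apply (psumZ_le _ (fun k => 2 * ((/2)^g * Env k) +
               2 * (if (Z.abs k <=? Z.of_nat N)%Z then 2 / INR (S m) else 0) + 2 * tailZ N f k)).
      intros k. eapply Rle_trans. apply (Cnorm2_Csub_tri _ (tg g k)).
      pose proof (ebound g k). rewrite Htg. pose proof (dbound y m N t k Hev (Nat.le_max_l _ _) Ht). fold f in H0. rewrite Htg in H. lra.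
    + rewrite !psumZ_plus, !psumZ_scal, psumZ_Env.
      pose proof (ind_sum (2 / INR (S m)) N M ltac:(unfold Rdiv; apply Rmult_le_pos; [lra|left; apply Rinv_0_lt_compat; lra])).
      pose proof (psumZ_tail f l N M Hf Hl).
      pose proof (pow_le (/2) g ltac:(lra)). pose proof (pow_le (7/8) M ltac:(lra)).
      unfold bound. nra.
  - exists L. split; [exact HL|].
    assert (0 <= L).
    { eapply Rle_trans; [|apply (psumZ_le_lim _ L 0 (fun j => Cnorm2_nonneg _) HL)].
      apply psumZ_nonneg. intros; apply Cnorm2_nonneg. }
    assert (L < eps * eps) by (unfold bound, e2 in *; lra).
    rewrite <- (sqrt_square eps) by lra. apply sqrt_lt_1_alt. lra.
Qed.

Theorem mainTheorem8 : M_diskcyclic Fshift inM /\ ~ M_hypercyclic Fshift inM.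
Proof.
  split; [|exact not_hyper].
  exists X. split; [exact X_l2|].
  intros y Hy eps Heps. destruct (dense y eps Hy Heps) as [g Hg].
  exists (alpha g), (2 * p g)%nat. split; [apply alpha_norm|]. split; [apply Zs_M|exact Hg].
Qed.
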